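(* (1) $H(1,0)\wedge H(1,0)\cong A(3\mid 0)$; (2) $H(0,1)\wedge H(0,1)\cong A(1\mid0)$; (3) for $m+n\ge2$, $H(m,n)\wedge H(m,n)\cong A(r\mid s)$ with $r=2m^2-m+\frac{n(n+1)}{2}$ and $s=2mn$; (4) $H_1\wedge H_1\cong A(1\mid 2)$; (5) for $m\ge2$, $H_m\wedge H_m\cong A(m^2\mid m^2)$.
   Context: All algebras are over a field $\mathbb{F}$ of characteristic $\neq 2,3$. $A(r\mid s)$ is the abelian Lie superalgebra of dimension $(r\mid s)$. $H(m,n)$ has even basis $x_1,\dots,x_{2m},z$, odd basis $y_1,\dots,y_n$, nonzero brackets $[x_i,x_{m+i}]=z$, $[y_j,y_j]=z$. $H_m$ has even basis $x_1,\dots,x_m$, odd basis $y_1,\dots,y_m,z$, nonzero brackets $[x_j,y_j]=z$. Non-abelian tensor square: $L\otimes L$ is the Lie superalgebra generated by symbols $x\otimes y$ ($x,y$ homogeneous, $|x\otimes y|=|x|+|y|$) subject to bilinearity, $[x,x']\otimes y=x\otimes[x',y]-(-1)^{|x||x'|}x'\otimes[x,y]$, $x\otimes[y,y']=(-1)^{|y'|(|x|+|y|)}[y',x]\otimes y-(-1)^{|x||y|}[y,x]\otimes y'$, and $[x\otimes y,x'\otimes y']=-(-1)^{|x||y|}[y,x]\otimes[x',y']$. The exterior square is $L\wedge L=(L\otimes L)/(L\square L)$, where $L\square L$ is the graded ideal generated by $x\otimes y+(-1)^{|x||y|}y\otimes x$ for homogeneous $x,y$ and by $x_0\otimes x_0$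 for $x_0\in L_{\bar 0}$. *)

(* Defs.v *)
From HB Require Import structures.
From mathcomp Require Import all_boot all_order all_algebra.
Set Implicit Arguments. Unset Strict Implicit. Unset Printing Implicit Defensive.
Import GRing.Theory.
Local Open Scope ring_scope.

(* A (candidate) Lie superalgebra over F: an F-vector space together with a
   Z/2-grading, given by the predicates [lsa_hom false] (even part) and
   [lsa_hom true] (odd part), and a bracket. *)
Record lsa (F : fieldType) := LSA {
  lsa_car : lmodType F;
  lsa_hom : bool -> lsa_car -> Prop;
  lsa_br  : lsa_car -> lsa_car -> lsa_car
}.
Arguments LSA {F}.
Arguments lsa_car {F} l.
Arguments lsa_hom {F} l.
Arguments lsa_br {F} l.

Definition sgn (F : fieldType) (b : bool) : F := (-1) ^+ b.

Definition is_lsa (F : fieldType) (L : lsa F) : Prop :=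
  let hom := lsa_hom L in let br := lsa_br L in
  (forall a, hom a 0) /\
  (forall a (c : F) x y, hom a x -> hom a y -> hom a (c *: x + y)) /\
  (forall x, exists x0 x1, [/\ hom false x0, hom true x1 & x = x0 + x1]) /\
  (forall x, hom false x -> hom true x -> x = 0) /\
  (forall (c : F) x y z, br (c *: x + y) z = c *: br x z + br y z) /\
  (forall (c : F) x y z, br z (c *: x + y) = c *: br z x + br z y) /\
  (forall a b x y, hom a x -> hom b y -> hom (a (+) b) (br x y)) /\
  (forall a b x y, hom a x -> hom b y ->
     br x y = - (sgn F (a && b) *: br y x)) /\
  (forall a b c x y z, hom a x -> hom b y -> hom c z ->
     sgn F (a && c) *: br x (br y z) + sgn F (b && a) *: br y (br z x)
     + sgn F (c && b) *: br z (br x y) = 0).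

Definition lsa_morph (F : fieldType) (L M : lsa F)
  (f : lsa_car L -> lsa_car M) : Prop :=
  (forall (c : F) x y, f (c *: x + y) = c *: f x + f y) /\
  (forall a x, lsa_hom L a x -> lsa_hom M a (f x)) /\
  (forall x y, f (lsa_br L x y) = lsa_br M (f x) (f y)).

Definition lsa_iso (F : fieldType) (L M : lsa F) : Prop :=
  exists f : lsa_car L -> lsa_car M, lsa_morph f /\ bijective f.

(* A map w : L x L -> M (w x y standing for the image of the generator x /\ y)
   satisfying all the defining relations of the exterior square L /\ L:
   bilinearity, |x /\ y| = |x| + |y|, the three relations of the non-abelian
   tensor square, and the relations generating L [] L. *)
Definition ext_pairing (F : fieldType) (L M : lsa F)
  (w : lsa_car L -> lsa_car L -> lsa_car M) : Prop :=
  let hom := lsa_hom L in let br := lsa_br L in let brM := lsa_br M in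
  (forall (c : F) x y z, w (c *: x + y) z = c *: w x z + w y z) /\
  (forall (c : F) x y z, w z (c *: x + y) = c *: w z x + w z y) /\
  (forall a b x y, hom a x -> hom b y -> lsa_hom M (a (+) b) (w x y)) /\
  (forall a a' b x x' y, hom a x -> hom a' x' -> hom b y ->
     w (br x x') y = w x (br x' y) - sgn F (a && a') *: w x' (br x y)) /\
  (forall a b b' x y y', hom a x -> hom b y -> hom b' y' ->
     w x (br y y') = sgn F (b' && (a (+) b)) *: w (br y' x) y
                     - sgn F (a && b) *: w (br y x) y') /\
  (forall a b a' b' x y x' y', hom a x -> hom b y -> hom a' x' -> hom b' y' ->
     brM (w x y) (w x' y') = - (sgn F (a && b) *: w (br y x) (br x' y'))) /\
  (forall a b x y, hom a x -> hom b y -> w x y + sgn F (a && b) *: w y x = 0) /\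
  (forall x, hom false x -> w x x = 0).

(* (E, w) is the exterior square of L: the Lie superalgebra presented by the
   generators x /\ y and the relations above (universal property). *)
Definition ext_universal (F : fieldType) (L E : lsa F)
  (w : lsa_car L -> lsa_car L -> lsa_car E) : Prop :=
  ext_pairing w /\
  forall (M : lsa F), is_lsa M ->
  forall w' : lsa_car L -> lsa_car L -> lsa_car M, ext_pairing w' ->
  exists f : lsa_car E -> lsa_car M,
    (lsa_morph f /\ forall x y, f (w x y) = w' x y) /\
    (forall g : lsa_car E -> lsa_car M,
       lsa_morph g -> (forall x y, g (w x y) = w' x y) -> forall e, f e = g e).

Arguments ext_universal {F} L E w.

(* "L /\ L is isomorphic to A": the exterior square exists and is realized on A,
   and every exterior square of L is isomorphic to A. *)
Definition ext_square_iso (F : fieldType) (L A : lsa F) : Prop :=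
  (exists w, ext_universal L A w) /\
  (forall (E : lsa F) w, is_lsa E -> ext_universal L E w -> lsa_iso E A).

(* i-th coordinate of a row vector (0 outside the range) *)
Definition coord (F : fieldType) (k : nat) (v : 'rV[F]_k) (i : nat) : F :=
  if (insub i : option 'I_k) is Some j then v 0 j else 0.

Definition ebasis (F : fieldType) (k : nat) (i : nat) : 'rV[F]_k :=
  \row_(j < k) (if (j : nat) == i then 1 else 0).

Definition coord_lsa (F : fieldType) (k : nat) (p : 'I_k -> bool)
  (br : 'rV[F]_k -> 'rV[F]_k -> 'rV[F]_k) : lsa F :=
  LSA ('rV[F]_k : lmodType F)
      (fun a v => forall i : 'I_k, p i != a -> v 0 i = 0) br.

(* A(r|s): abelian, basis e_0..e_{r-1} even, e_r..e_{r+s-1} odd *)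
Definition Aab (F : fieldType) (r s : nat) : lsa F :=
  coord_lsa (fun i : 'I_(r + s) => (r <= i)%N) (fun _ _ => 0).

(* H(m,n): coordinates 0..2m-1 = x_1..x_{2m} (even), 2m = z (even),
   2m+1..2m+n = y_1..y_n (odd);  [x_i,x_{m+i}] = z, [y_j,y_j] = z. *)
Definition Hmn (F : fieldType) (m n : nat) : lsa F :=
  coord_lsa (fun i : 'I_(2 * m + 1 + n) => (2 * m < i)%N)
    (fun u v =>
       (\sum_(i < m) (coord u i * coord v (m + i)%N - coord u (m + i)%N * coord v i)
        + \sum_(j < n) coord u (2 * m + 1 + j)%N * coord v (2 * m + 1 + j)%N)
       *: ebasis F (2 * m + 1 + n) (2 * m)%N).

(* H_m: coordinates 0..m-1 = x_1..x_m (even), m..2m-1 = y_1..y_m (odd),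
   2m = z (odd);  [x_j,y_j] = z. *)
Definition Hm (F : fieldType) (m : nat) : lsa F :=
  coord_lsa (fun i : 'I_(2 * m + 1) => (m <= i)%N)
    (fun u v =>
       (\sum_(j < m) (coord u j * coord v (m + j)%N - coord u (m + j)%N * coord v j))
       *: ebasis F (2 * m + 1) (2 * m)%N).

(* Main.v *)
Require Import Defs.
From HB Require Import structures.
From mathcomp Require Import all_boot all_order all_algebra.
Import GRing.Theory.
Local Open Scope ring_scope.
From mathcomp Require Import ring zify.
Set Implicit Arguments. Unset Strict Implicit. Unset Printing Implicit Defensive.

Notation dcoord := Defs.coord.

Section Basics.
Variable F : fieldType.

Lemma sgn_sq (b : bool) : sgn F b * sgn F b = 1.
Proof. by case: b; rewrite /sgn ?expr1 ?expr0 ?mulN1r ?opprK ?mulr1. Qed.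

Lemma sgnF : sgn F false = 1. Proof. by rewrite /sgn expr0. Qed.
Lemma sgnT : sgn F true = -1. Proof. by rewrite /sgn expr1. Qed.

Definition islin (V W : lmodType F) (f : V -> W) :=
  forall (c : F) x y, f (c *: x + y) = c *: f x + f y.

Lemma lin0 (V W : lmodType F) (f : V -> W) : islin f -> f 0 = 0.
Proof.
move=> H; have := H 1 0 0; rewrite !scale1r addr0 => h.
by apply: (@addrI _ (f 0)); rewrite addr0 -h.
Qed.

Lemma linZ (V W : lmodType F) (f : V -> W) : islin f -> forall c x, f (c *: x) = c *: f x.
Proof. by move=> H c x; rewrite -(addr0 (c *: x)) H (lin0 H) addr0. Qed.

Lemma linD (V W : lmodType F) (f : V -> W) : islin f -> forall x y, f (x + y) = f x + f y.
Proof. by move=> H x y; have := H 1 x y; rewrite !scale1r. Qed.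

Lemma linN (V W : lmodType F) (f : V -> W) : islin f -> forall x, f (- x) = - f x.
Proof. by move=> H x; rewrite -scaleN1r linZ // scaleN1r. Qed.

Lemma lin_sum (V W : lmodType F) (f : V -> W) (I : finType) (c : I -> F) (x : I -> V) :
  islin f -> f (\sum_i c i *: x i) = \sum_i c i *: f (x i).
Proof.
move=> H; apply: (big_rec2 (fun a b => f b = a)); first exact: lin0.
by move=> i y1 y2 _ <-; rewrite H.
Qed.

Lemma lin_sum' (V W : lmodType F) (f : V -> W) (I : finType) (x : I -> V) :
  islin f -> f (\sum_i x i) = \sum_i f (x i).
Proof.
move=> H; apply: (big_rec2 (fun a b => f b = a)); first exact: lin0.
by move=> i y1 y2 _ <-; rewrite linD.
Qed.

Lemma ebasisE k (i : nat) (j : 'I_k) : ebasis F k i 0 j = ((j : nat) == i)%:R.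
Proof. by rewrite mxE; case: eqP. Qed.

Lemma row_expand k (v : 'rV[F]_k) : v = \sum_(i < k) v 0 i *: ebasis F k i.
Proof.
apply/rowP => j; rewrite summxE (bigD1 j) //= big1 => [|i ij].
  by rewrite mxE ebasisE eqxx mulr1 addr0.
rewrite mxE ebasisE (_ : ((j : nat) == i) = false) ?mulr0 //.
by apply/negbTE; rewrite eq_sym.
Qed.

Lemma coordE k (v : 'rV[F]_k) i (H : (i < k)%N) : dcoord v i = v 0 (Ordinal H).
Proof. by rewrite /Defs.coord insubT. Qed.

Lemma coordN k (v : 'rV[F]_k) i : (k <= i)%N -> dcoord v i = 0.
Proof. by move=> H; rewrite /Defs.coord insubF // ltnNge H. Qed.

Lemma coord_lin k (c : F) (u v : 'rV[F]_k) i : dcoord (c *: u + v) i = c * dcoord u i + dcoord v i.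
Proof.
case: (ltnP i k) => H; first by rewrite !(coordE _ H) !mxE.
by rewrite !coordN // mulr0 addr0.
Qed.

Lemma coord_eb k (a i : nat) : dcoord (ebasis F k a) i = ((i < k)%N && (i == a))%:R.
Proof.
case: (ltnP i k) => H; first by rewrite (coordE _ H) ebasisE.
by rewrite coordN // ltnNge H.
Qed.

End Basics.

Section LsaGen.
Variable F : fieldType.

Lemma morph_comp (L M N : lsa F) (f : lsa_car L -> lsa_car M) (g : lsa_car M -> lsa_car N) :
  lsa_morph f -> lsa_morph g -> lsa_morph (g \o f).
Proof.
move=> [f1 [f2 f3]] [g1 [g2 g3]]; split; last split.
- by move=> c x y /=; rewrite f1 g1.
- by move=> a x Hx /=; apply: g2; apply: f2.
- by move=> x y /=; rewrite f3 g3.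
Qed.

Lemma morph_id (L : lsa F) : lsa_morph (@id (lsa_car L)).
Proof. by split; last split. Qed.

Lemma univ_iso (L E A : lsa F) wE wA :
  is_lsa E -> is_lsa A -> ext_universal L E wE -> ext_universal L A wA -> lsa_iso E A.
Proof.
move=> lE lA [pE uE] [pA uA].
have [f [[mf fw] _]] := uE A lA wA pA.
have [g [[mg gw] _]] := uA E lE wE pE.
have [h [[mh hw] hu]] := uE E lE wE pE.
have [h' [[mh' hw'] hu']] := uA A lA wA pA.
exists f; split => //; exists g => x.
- have e1 : forall e, h e = (g \o f) e.
    by apply: hu; [exact: morph_comp | move=> x' y'; rewrite /= fw gw].
  have e2 : forall e, h e = id e by apply: hu; [exact: morph_id | by []].
  by rewrite -[RHS]e2 e1.
- have e1 : forall e, h' e = (f \o g) e.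
    by apply: hu'; [exact: morph_comp | move=> x' y'; rewrite /= gw fw].
  have e2 : forall e, h' e = id e by apply: hu'; [exact: morph_id | by []].
  by rewrite -[RHS]e2 e1.
Qed.

Lemma is_lsa_ab k (p : 'I_k -> bool) : is_lsa (coord_lsa p (fun _ _ => (0 : 'rV[F]_k))).
Proof.
rewrite /is_lsa /=.
split; first by move=> a i _; rewrite mxE.
split; first by move=> a c x y Hx Hy i Hi; rewrite !mxE Hx // Hy // mulr0 addr0.
split.
  move=> x; exists (\row_i if p i then 0 else x 0 i), (\row_i if p i then x 0 i else 0).
  split.
  - by move=> i; rewrite mxE; case: (p i).
  - by move=> i; rewrite mxE; case: (p i).
  - by apply/rowP => i; rewrite !mxE; case: (p i); rewrite ?add0r ?addr0.
split; first by move=> x H0 H1; apply/rowP => i; rewrite mxE; case E: (p i);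
  [apply: H0; rewrite E | apply: H1; rewrite E].
split; first by move=> *; rewrite scaler0 addr0.
split; first by move=> *; rewrite scaler0 addr0.
split; first by move=> a b x y _ _ i _; rewrite mxE.
split; first by move=> *; rewrite scaler0 oppr0.
by move=> *; rewrite !scaler0 !addr0.
Qed.

Lemma ext_sq_of (L A : lsa F) w : is_lsa A -> ext_universal L A w -> ext_square_iso L A.
Proof.
move=> lA U; split; first by exists w.
by move=> E w' lE UE; apply: univ_iso lE lA UE U.
Qed.

End LsaGen.

Section Gen.
Variables (F : fieldType) (hF2 : (2%:R : F) != 0).
Variables (K : nat) (p : 'I_K -> bool) (br : 'rV[F]_K -> 'rV[F]_K -> 'rV[F]_K).
Variables (r s : nat) (S : seq (nat * nat)).

Local Notation L := (coord_lsa p br).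
Local Notation A := (Aab F r s).
Local Notation E := (ebasis F K).

Definition T (k : nat) (l l' : 'I_K) : F :=
  if ((l : nat), (l' : nat)) == nth (0,0)%N S k then 1
  else if (((l' : nat), (l : nat)) == nth (0,0)%N S k) && (l != l')
       then - sgn F (p l && p l') else 0.

Definition wS (u v : 'rV[F]_K) : 'rV[F]_(r + s) :=
  \row_(k < r + s) \sum_(l < K) \sum_(l' < K) T k l l' * (u 0 l * v 0 l').

Lemma homE (i : 'I_K) : lsa_hom L (p i) (E i).
Proof.
move=> j Hj; rewrite ebasisE; case: eqP => // /ord_inj ji.
by move: Hj; rewrite ji eqxx.
Qed.

Lemma sum_delta (g : 'I_K -> F) (i : 'I_K) :
  \sum_(l < K) g l * ((l : nat) == (i : nat))%:R = g i.
Proof.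
rewrite (bigD1 i) //= eqxx mulr1 big1 ?addr0 // => l li.
by rewrite (_ : ((l : nat) == i) = false) ?mulr0 //; apply/negbTE.
Qed.

Lemma bil_expand (V : lmodType F) (w' : 'rV[F]_K -> 'rV[F]_K -> V) :
  (forall (c : F) x y z, w' (c *: x + y) z = c *: w' x z + w' y z) ->
  (forall (c : F) x y z, w' z (c *: x + y) = c *: w' z x + w' z y) ->
  forall u v, w' u v = \sum_(l < K) \sum_(l' < K) (u 0 l * v 0 l') *: w' (E l) (E l').
Proof.
move=> w1 w2 u v.
rewrite {1}(row_expand u) (lin_sum (f := fun x => w' x v)); last by move=> c x y; apply: w1.
apply: eq_bigr => l _; rewrite {1}(row_expand v) (lin_sum (f := w' (E l))); last first.
  by move=> c x y; apply: w2.
rewrite scaler_sumr; apply: eq_bigr => l' _; by rewrite scalerA.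
Qed.

Hypothesis Hsize : size S = (r + s)%N.
Hypothesis Huniq : uniq S.
Hypothesis HP : forall k : 'I_(r + s), exists i j : 'I_K,
  [/\ nth (0,0)%N S k = ((i : nat), (j : nat)), p i (+) p j = (r <= k)%N & ((i : nat) = j -> p i)].
Hypothesis Hrev : forall i j : nat, i != j -> (i, j) \in S -> (j, i) \notin S.

Lemma T_in (k : 'I_(r + s)) (l l' : 'I_K) : ((l : nat), (l' : nat)) \in S ->
  T k l l' = ((k : nat) == index ((l : nat), (l' : nat)) S)%:R.
Proof.
move=> H; rewrite /T.
have kS : (k < size S)%N by rewrite Hsize.
case: eqP => [e | ne].
  by rewrite e index_uniq // eqxx.
have -> : ((k : nat) == index ((l : nat), (l' : nat)) S) = false.
  by apply/negbTE; apply/eqP => ek; apply: ne; rewrite ek nth_index.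
case: eqP => //= e; case: eqP => // nll'.
have := Hrev (i := l) (j := l'); rewrite H /=.
have -> : (l : nat) != l' by apply/eqP => h; apply: nll'; exact: val_inj h.
by rewrite e mem_nth // => /(_ isT isT).
Qed.

Lemma T_rev (k : 'I_(r + s)) (l l' : 'I_K) : ((l : nat), (l' : nat)) \notin S ->
  ((l' : nat), (l : nat)) \in S ->
  T k l l' = ((k : nat) == index ((l' : nat), (l : nat)) S)%:R * - sgn F (p l && p l').
Proof.
move=> H H'; rewrite /T.
have kS : (k < size S)%N by rewrite Hsize.
case: eqP => [e | _]; first by move: H; rewrite e mem_nth.
have ll' : l != l' by apply/eqP => ll; rewrite ll in H H'; by rewrite H' in H.
rewrite ll' andbT; case: eqP => [e | ne].
  by rewrite e index_uniq // eqxx mul1r.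
have -> : ((k : nat) == index ((l' : nat), (l : nat)) S) = false.
  by apply/negbTE; apply/eqP => ek; apply: ne; rewrite ek nth_index.
by rewrite mul0r.
Qed.

Lemma T_out (k : 'I_(r + s)) (l l' : 'I_K) : ((l : nat), (l' : nat)) \notin S ->
  ((l' : nat), (l : nat)) \notin S -> T k l l' = 0.
Proof.
move=> H H'; rewrite /T.
have kS : (k < size S)%N by rewrite Hsize.
case: eqP => [e | _]; first by move: H; rewrite e mem_nth.
case: eqP => [e | _] //; by move: H'; rewrite e mem_nth.
Qed.

Lemma T_par (k : 'I_(r + s)) (l l' : 'I_K) : T k l l' != 0 -> p l (+) p l' = (r <= k)%N.
Proof.
have [i [j [e pij _]]] := HP k.
rewrite /T e; case: (((l : nat), (l' : nat)) =P ((i : nat), (j : nat))) => [[= a b] _ |_].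
  by rewrite (ord_inj a) (ord_inj b).
case: (((l' : nat), (l : nat)) =P ((i : nat), (j : nat))) => [[= a b] _ | _].
  by rewrite (ord_inj a) (ord_inj b) addbC.
by rewrite eqxx.
Qed.

Lemma T_anti (k : 'I_(r + s)) (l l' : 'I_K) :
  T k l l' + sgn F (p l && p l') * T k l' l = 0.
Proof.
have [i [j [e pij dg]]] := HP k.
rewrite /T e.
case: (eqVneq l l') => [<- | ll'].
  rewrite andbF; case: eqP => [[= /ord_inj li b] | _]; last by rewrite mulr0 addr0.
  have pl : p l by rewrite li; apply: dg; rewrite -li b.
  by rewrite andbb pl sgnT mulr1 subrr.
rewrite /= !andbT.
case: eqP => [[= a b] | na]; case: eqP => [[= c d] | nc].
- by move: ll'; rewrite (val_inj (etrans a (esym c))) eqxx.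
- by rewrite andbC mulrN sgn_sq subrr.
- by rewrite mulr1 andbC addrC subrr.
- by rewrite mulr0 addr0.
Qed.

Section Univ.
Variables (M : lsa F) (w' : lsa_car L -> lsa_car L -> lsa_car M).
Hypothesis hw : ext_pairing w'.

Definition Pk (k : nat) := w' (E (nth (0,0)%N S k).1) (E (nth (0,0)%N S k).2).

Lemma sum_T (l l' : 'I_K) (Hdead : ((l : nat), (l' : nat)) \notin S ->
     ((l' : nat), (l : nat)) \notin S -> w' (E l) (E l') = 0) :
  \sum_(k < r + s) T k l l' *: Pk k = w' (E l) (E l').
Proof.
case: hw => w1 [w2 [w3 [w4 [w5 [w6 [w7 w8]]]]]].
case: (boolP (((l : nat), (l' : nat)) \in S)) => H.
  have k0S : (index ((l : nat), (l' : nat)) S < r + s)%N by rewrite -Hsize index_mem.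
  rewrite (bigD1 (Ordinal k0S)) // (T_in (Ordinal k0S)) //= big1 ?addr0 => [|k kk0]; last first.
    rewrite T_in // (_ : ((k : nat) == _) = false) ?scale0r //.
    by apply/negbTE; apply: contra kk0 => /eqP e; apply/eqP/ord_inj.
  by rewrite eqxx scale1r /Pk nth_index.
case: (boolP (((l' : nat), (l : nat)) \in S)) => H'; last first.
  by rewrite Hdead // big1 // => k _; rewrite T_out // scale0r.
have k0S : (index ((l' : nat), (l : nat)) S < r + s)%N by rewrite -Hsize index_mem.
rewrite (bigD1 (Ordinal k0S)) // (T_rev (Ordinal k0S)) //= big1 ?addr0 => [|k kk0]; last first.
  rewrite T_rev // (_ : ((k : nat) == _) = false) ?mul0r ?scale0r //.
  by apply/negbTE; apply: contra kk0 => /eqP e; apply/eqP/ord_inj.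
rewrite eqxx mul1r /Pk nth_index //=.
have := w7 _ _ _ _ (homE (i:=l')) (homE (i:=l)) => /eqP; rewrite addr_eq0 => /eqP ->.
by rewrite scaleNr scalerN opprK scalerA andbC sgn_sq scale1r.
Qed.

End Univ.

Lemma eb_ne k (i : nat) (j : 'I_k) : (j : nat) != i -> ebasis F k i 0 j = 0.
Proof. by move=> H; rewrite ebasisE (negbTE H). Qed.

Lemma eb_eq k (j : 'I_k) : ebasis F k j 0 j = 1.
Proof. by rewrite ebasisE eqxx. Qed.

Lemma wS_E (i j : 'I_K) : wS (E i) (E j) = \row_(k < r + s) T k i j.
Proof.
apply/rowP => k; rewrite !mxE (bigD1 i) //= [X in _ + X]big1 ?addr0 => [|l li].
  rewrite (bigD1 j) //= [X in _ + X]big1 ?addr0 => [|l' lj].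
    by rewrite !eb_eq !mulr1.
  by rewrite (eb_ne (j := l')) ?mulr0.
apply: big1 => l' _.
by rewrite (eb_ne (j := l)) ?mul0r ?mulr0.
Qed.

Lemma eb_wS (k : 'I_(r + s)) :
  ebasis F (r + s) k = wS (E (nth (0,0)%N S k).1) (E (nth (0,0)%N S k).2).
Proof.
have [i [j [e _ _]]] := HP k.
rewrite e /= wS_E; apply/rowP => k'; rewrite !mxE T_in; last first.
  by rewrite -e mem_nth // Hsize.
rewrite -e index_uniq ?Hsize //; by case: eqP.
Qed.

Hypothesis Hdead : forall (M : lsa F) (w' : lsa_car L -> lsa_car L -> lsa_car M),
  ext_pairing w' -> forall l l' : 'I_K, ((l : nat), (l' : nat)) \notin S ->
  ((l' : nat), (l : nat)) \notin S -> w' (E l) (E l') = 0.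
Variables (z : 'I_K) (B : 'rV[F]_K -> 'rV[F]_K -> F).
Hypothesis Hbr : forall u v, br u v = B u v *: E z.
Hypothesis Hzz : ((z : nat), (z : nat)) \notin S.

Lemma wS_l (c : F) x y v : wS (c *: x + y) v = c *: wS x v + wS y v.
Proof.
apply/rowP => k; rewrite !mxE mulr_sumr -big_split /=; apply: eq_bigr => l _.
rewrite mulr_sumr -big_split /=; apply: eq_bigr => l' _; rewrite !mxE /=; ring.
Qed.

Lemma wS_r (c : F) x y v : wS v (c *: x + y) = c *: wS v x + wS v y.
Proof.
apply/rowP => k; rewrite !mxE mulr_sumr -big_split /=; apply: eq_bigr => l _.
rewrite mulr_sumr -big_split /=; apply: eq_bigr => l' _; rewrite !mxE /=; ring.
Qed.

Lemma wS_hom a b x y : lsa_hom L a x -> lsa_hom L b y -> lsa_hom A (a (+) b) (wS x y).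
Proof.
move=> Hx Hy k Hk; rewrite mxE; apply: big1 => l _; apply: big1 => l' _.
case: (eqVneq (p l) a) => pl; last by rewrite (Hx l) ?pl // mul0r mulr0.
case: (eqVneq (p l') b) => pl'; last by rewrite (Hy l') ?pl' // mulr0 mulr0.
case: (eqVneq (T k l l') 0) => [-> | /T_par]; first by rewrite mul0r.
by rewrite pl pl' => h; move: Hk; rewrite /= h eqxx.
Qed.

Lemma wS_anti a b x y : lsa_hom L a x -> lsa_hom L b y ->
  wS x y + sgn F (a && b) *: wS y x = 0.
Proof.
move=> Hx Hy; apply/rowP => k; rewrite !mxE [X in _ + _ * X]exchange_big /=.
rewrite mulr_sumr -big_split /=; apply: big1 => l _.
rewrite mulr_sumr -big_split /=; apply: big1 => l' _.
case: (eqVneq (p l) a) => pl; last by rewrite (Hx l) ?pl // !(mul0r, mulr0) addr0.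
case: (eqVneq (p l') b) => pl'; last by rewrite (Hy l') ?pl' // !(mul0r, mulr0) addr0.
have := T_anti k l l'; rewrite pl pl' => h.
transitivity ((T k l l' + sgn F (a && b) * T k l' l) * (x 0 l * y 0 l')); first by ring.
by rewrite h mul0r.
Qed.

Lemma wS_diag x : lsa_hom L false x -> wS x x = 0.
Proof.
move=> Hx; apply/rowP => k; rewrite !mxE.
set S0 := \sum_(l < K) _.
have h : S0 + S0 = 0.
  rewrite {2}/S0 exchange_big /= -big_split /=; apply: big1 => l _.
  rewrite -big_split /=; apply: big1 => l' _.
  case: (eqVneq (p l) false) => pl; last by rewrite (Hx l) ?pl // !(mul0r, mulr0) addr0.
  case: (eqVneq (p l') false) => pl'; last by rewrite (Hx l') ?pl' // !(mul0r, mulr0) addr0.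
  have := T_anti k l l'; rewrite pl pl' sgnF mul1r => h.
  transitivity ((T k l l' + T k l' l) * (x 0 l * x 0 l')); first by ring.
  by rewrite h mul0r.
have : S0 * 2%:R = 0 by rewrite mulr_natr mulr2n.
by move/eqP; rewrite mulf_eq0 (negbTE hF2) orbF => /eqP.
Qed.

Lemma wS_linl v : islin (fun x => wS x v).
Proof. by move=> c x y; apply: wS_l. Qed.
Lemma wS_linr v : islin (wS v).
Proof. by move=> c x y; apply: wS_r. Qed.

Lemma wS_zz u v u' v' : wS (br u v) (br u' v') = 0.
Proof.
rewrite !Hbr (linZ (wS_linl _)) (linZ (wS_linr _)) wS_E.
rewrite (_ : \row_k T k z z = 0) ?scaler0 //.
by apply/rowP => k; rewrite !mxE T_out.
Qed.

Section ZFree.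
Hypothesis Hzfree : forall x : nat, ((z : nat), x) \notin S /\ (x, (z : nat)) \notin S.

Lemma wS_zl v : wS (E z) v = 0.
Proof.
apply/rowP => k; rewrite !mxE; apply: big1 => l _; apply: big1 => l' _.
case: (eqVneq l z) => [-> | lz].
  by rewrite T_out ?mul0r //; [exact: (Hzfree _).1 | exact: (Hzfree _).2].
by rewrite eb_ne ?mul0r ?mulr0 //; apply: contra lz => /eqP h; apply/eqP/ord_inj.
Qed.

Lemma wS_zr v : wS v (E z) = 0.
Proof.
apply/rowP => k; rewrite !mxE; apply: big1 => l _; apply: big1 => l' _.
case: (eqVneq l' z) => [-> | lz].
  by rewrite T_out ?mul0r //; [exact: (Hzfree _).2 | exact: (Hzfree _).1].
by rewrite (eb_ne (j := l')) ?mul0r ?mulr0 //; apply: contra lz => /eqP h; apply/eqP/ord_inj.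
Qed.

Lemma H4_zfree : forall a a' b x x' y, lsa_hom L a x -> lsa_hom L a' x' -> lsa_hom L b y ->
  wS (br x x') y = wS x (br x' y) - sgn F (a && a') *: wS x' (br x y).
Proof.
move=> *; rewrite !Hbr (linZ (wS_linl _)) !(linZ (wS_linr _)) wS_zl !wS_zr.
by rewrite !scaler0 subrr.
Qed.

Lemma H5_zfree : forall a b b' x y y', lsa_hom L a x -> lsa_hom L b y -> lsa_hom L b' y' ->
  wS x (br y y') = sgn F (b' && (a (+) b)) *: wS (br y' x) y
                     - sgn F (a && b) *: wS (br y x) y'.
Proof.
move=> *; rewrite !Hbr !(linZ (wS_linl _)) (linZ (wS_linr _)) !wS_zl wS_zr.
by rewrite !scaler0 subrr.
Qed.
End ZFree.

Section Main.
Hypothesis H4 : forall a a' b x x', forall y, lsa_hom L a x -> lsa_hom L a' x' -> lsa_hom L b y ->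
  wS (br x x') y = wS x (br x' y) - sgn F (a && a') *: wS x' (br x y).
Hypothesis H5 : forall a b b' x y y', lsa_hom L a x -> lsa_hom L b y -> lsa_hom L b' y' ->
  wS x (br y y') = sgn F (b' && (a (+) b)) *: wS (br y' x) y
                     - sgn F (a && b) *: wS (br y x) y'.

Lemma wS_pair : @ext_pairing F L A wS.
Proof.
split; first exact: wS_l.
split; first by move=> c x y v; apply: wS_r.
split; first exact: wS_hom.
split; first exact: H4.
split; first exact: H5.
split; first by move=> *; rewrite wS_zz scaler0 oppr0.
split; first exact: wS_anti.
exact: wS_diag.
Qed.

Definition fS (M : lsa F) (w' : lsa_car L -> lsa_car L -> lsa_car M) (e : 'rV[F]_(r + s)) :
  lsa_car M := \sum_(k < r + s) e 0 k *: Pk w' k.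

Lemma Pk_hom (M : lsa F) (w' : lsa_car L -> lsa_car L -> lsa_car M) :
  ext_pairing w' -> forall k : 'I_(r + s), lsa_hom M (r <= k)%N (Pk w' k).
Proof.
case=> w1 [w2 [w3 _]] k; have [i [j [e pij _]]] := HP k.
rewrite /Pk e /= -pij; exact: w3 (homE (i := i)) (homE (i := j)).
Qed.

Lemma Pk_br (M : lsa F) (w' : lsa_car L -> lsa_car L -> lsa_car M) :
  ext_pairing w' -> forall k k' : 'I_(r + s), lsa_br M (Pk w' k) (Pk w' k') = 0.
Proof.
move=> hw; have hw' := hw; case: hw' => w1 [w2 [w3 [w4 [w5 [w6 _]]]]] k k'.
have [i [j [e _ _]]] := HP k; have [i' [j' [e' _ _]]] := HP k'.
rewrite /Pk e e' /= (w6 _ _ _ _ _ _ _ _ (homE (i := i)) (homE (i := j)) (homE (i := i')) (homE (i := j'))).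
have l1 : forall v, islin (fun x => w' x v) by move=> v c x y; apply: w1.
have l2 : forall v, islin (w' v) by move=> v c x y; apply: w2.
rewrite /= !Hbr (linZ (l1 _)) (linZ (l2 _)) (Hdead hw) // !scaler0 oppr0 //.
Qed.

Theorem gen_univ : ext_universal L A wS.
Proof.
split; first exact: wS_pair.
move=> M lM w' hw.
have hw0 := hw; case: hw0 => w1 [w2 [w3 [w4 [w5 [w6 [w7 w8]]]]]].
case: lM => m0 [mcl [_ [_ [mb1 [mb2 _]]]]].
have lin : islin (fS w').
  move=> c x y; rewrite /fS scaler_sumr -big_split /=; apply: eq_bigr => k _.
  by rewrite !mxE scalerDl scalerA.
exists (fS w'); split; [split; [split; [exact: lin | split] | ] | ].
- move=> a e He; rewrite /fS.
  apply: (big_ind (lsa_hom M a)); first exact: m0.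
    by move=> x y hx hy; have := mcl a 1 x y hx hy; rewrite scale1r.
  move=> k _; case: (eqVneq ((r <= k)%N) a) => hk.
    have := mcl a (e 0 k) (Pk w' k) 0; rewrite addr0; apply => //.
    by rewrite -hk; apply: Pk_hom.
  by rewrite He ?hk // scale0r.
- move=> x y; rewrite (_ : lsa_br A x y = 0) // (lin0 lin) /fS.
  rewrite (lin_sum (f := fun t => lsa_br M t _)); last by move=> c u v; apply: mb1.
  rewrite big1 // => k _; rewrite (lin_sum (f := lsa_br M (Pk w' k))); last first.
    by move=> c u v; apply: mb2.
  by rewrite big1 ?scaler0 // => k' _; rewrite Pk_br // scaler0.
- move=> u v; rewrite /fS.
  transitivity (\sum_(k < r + s) \sum_(l < K) \sum_(l' < K)
                 (u 0 l * v 0 l') *: (T k l l' *: Pk w' k)).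
    apply: eq_bigr => k _; rewrite mxE scaler_suml; apply: eq_bigr => l _.
    rewrite scaler_suml; apply: eq_bigr => l' _; by rewrite scalerA mulrC.
  rewrite exchange_big; under eq_bigr => l _ do rewrite exchange_big.
  rewrite (bil_expand w1 w2 u v); apply: eq_bigr => l _; apply: eq_bigr => l' _.
  by rewrite -scaler_sumr sum_T // => *; apply: (Hdead hw).
- move=> g [g1 [g2 g3]] hg e.
  rewrite {2}(row_expand e) (lin_sum (f := g)) //; apply: eq_bigr => k _.
  by rewrite eb_wS hg.
Qed.

Theorem gen_main : ext_square_iso L A.
Proof. exact: ext_sq_of (is_lsa_ab _ _) gen_univ. Qed.

End Main.
End Gen.

Definition Sxx (nx : nat) : seq (nat * nat) := [seq (i, j) | j <- iota 0 nx, i <- iota 0 j].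
Definition Syy (y0 ny : nat) : seq (nat * nat) :=
  [seq ((y0 + a)%N, (y0 + b)%N) | b <- iota 0 ny, a <- iota 0 b.+1].
Definition Sxy (nx y0 ny : nat) : seq (nat * nat) :=
  [seq (i, (y0 + a)%N) | i <- iota 0 nx, a <- iota 0 ny].
Definition Sg nx y0 ny := Sxx nx ++ Syy y0 ny ++ Sxy nx y0 ny.

Lemma mem_Sxx nx i j : ((i, j) \in Sxx nx) = (i < j < nx)%N.
Proof.
apply/allpairsPdep/idP => [[j' [i' [hj hi [-> ->]]]] | H].
  by move: hj hi; rewrite !mem_iota; lia.
by exists j, i; rewrite !mem_iota; split => //; lia.
Qed.

Lemma mem_Syy y0 ny i j : ((i, j) \in Syy y0 ny) = (y0 <= i <= j)%N && (j < y0 + ny)%N.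
Proof.
apply/allpairsPdep/idP => [[j' [i' [hj hi [-> ->]]]] | H].
  by move: hj hi; rewrite !mem_iota; lia.
exists (j - y0)%N, (i - y0)%N; rewrite !mem_iota; split; try lia.
congr pair; lia.
Qed.

Lemma mem_Sxy nx y0 ny i j : ((i, j) \in Sxy nx y0 ny) = (i < nx)%N && (y0 <= j < y0 + ny)%N.
Proof.
apply/allpairsPdep/idP => [[j' [i' [hj hi [-> ->]]]] | H].
  by move: hj hi; rewrite !mem_iota; lia.
exists i, (j - y0)%N; rewrite !mem_iota; split; try lia.
congr pair; lia.
Qed.

Lemma mem_Sg nx y0 ny i j : ((i, j) \in Sg nx y0 ny) =
  [|| (i < j < nx)%N, (y0 <= i <= j)%N && (j < y0 + ny)%N | (i < nx)%N && (y0 <= j < y0 + ny)%N].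
Proof. by rewrite !mem_cat mem_Sxx mem_Syy mem_Sxy. Qed.

Lemma sumn_iota0 n : sumn (iota 0 n) = 'C(n, 2).
Proof. by rewrite -bin2_sum sumnE /index_iota subn0. Qed.

Lemma size_Sxx nx : size (Sxx nx) = 'C(nx, 2).
Proof.
rewrite /Sxx size_allpairs_dep (eq_map (fun j => size_iota 0 j)) map_id.
exact: sumn_iota0.
Qed.

Lemma size_Syy y0 ny : size (Syy y0 ny) = 'C(ny.+1, 2).
Proof.
rewrite /Syy size_allpairs_dep (eq_map (fun j => size_iota 0 j.+1)).
rewrite -sumn_iota0 /= -(iotaDl 1 0 ny) /=.
by elim: (iota 0 ny) => //= a l ->.
Qed.

Lemma size_Sxy nx y0 ny : size (Sxy nx y0 ny) = (nx * ny)%N.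
Proof. by rewrite /Sxy size_allpairs !size_iota. Qed.

Lemma uniq_Sg nx y0 ny : (nx <= y0)%N -> uniq (Sg nx y0 ny).
Proof.
move=> hxy; rewrite /Sg !cat_uniq.
have u1 : uniq (Sxx nx).
  apply: allpairs_uniq_dep; [exact: iota_uniq | by move=> *; exact: iota_uniq |].
  by move=> [j1 i1] [j2 i2] _ _ /= [-> ->].
have u2 : uniq (Syy y0 ny).
  apply: allpairs_uniq_dep; [exact: iota_uniq | by move=> *; exact: iota_uniq |].
  move=> [j1 i1] [j2 i2] _ _ /= [/addnI h1 /addnI h2].
  by rewrite h1 h2.
have u3 : uniq (Sxy nx y0 ny).
  apply: allpairs_uniq_dep; [exact: iota_uniq | by move=> *; exact: iota_uniq |].
  move=> [j1 i1] [j2 i2] _ _ /= [h1 /addnI h2].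
  by rewrite h1 h2.
rewrite u1 u2 u3 /= andbT.
apply/andP; split; apply/hasPn => [[a b]] /=.
- rewrite mem_cat mem_Syy mem_Sxy mem_Sxx; lia.
- rewrite mem_Sxy mem_Syy; lia.
Qed.

Lemma nth_Sg nx y0 ny k : (k < size (Sg nx y0 ny))%N ->
  let q := nth (0,0)%N (Sg nx y0 ny) k in
  [\/ (k < 'C(nx, 2))%N /\ q \in Sxx nx,
      ('C(nx, 2) <= k < 'C(nx, 2) + 'C(ny.+1, 2))%N /\ q \in Syy y0 ny |
      ('C(nx, 2) + 'C(ny.+1, 2) <= k)%N /\ q \in Sxy nx y0 ny].
Proof.
rewrite /Sg !size_cat size_Sxx size_Syy size_Sxy => hk /=.
rewrite nth_cat size_Sxx; case: ltnP => h1.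
  by apply: Or31; split => //; apply: mem_nth; rewrite size_Sxx.
rewrite nth_cat size_Syy; case: ltnP => h2.
  by apply: Or32; split; [lia | apply: mem_nth; rewrite size_Syy].
by apply: Or33; split; [lia | apply: mem_nth; rewrite size_Sxy; lia].
Qed.

Section GenSg.
Variables (F : fieldType) (hF2 : (2%:R : F) != 0).
Variables (K : nat) (p : 'I_K -> bool) (br : 'rV[F]_K -> 'rV[F]_K -> 'rV[F]_K).
Variables (z : 'I_K) (B : 'rV[F]_K -> 'rV[F]_K -> F).
Hypothesis Hbr : forall u v, br u v = B u v *: ebasis F K z.
Variables (nx y0 ny r s : nat).
Hypothesis hxy : (nx <= y0)%N.
Hypothesis hyK : (y0 + ny <= K)%N.
Hypothesis hpx : forall i : 'I_K, (i < nx)%N -> p i = false.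
Hypothesis hpy : forall i : 'I_K, (y0 <= i < y0 + ny)%N -> p i = true.
Hypothesis hr : r = ('C(nx, 2) + 'C(ny.+1, 2))%N.
Hypothesis hs : s = (nx * ny)%N.
Hypothesis hz : ~~ ((y0 <= z) && (z < y0 + ny))%N.

Local Notation L := (coord_lsa p br).
Local Notation E := (ebasis F K).
Local Notation S := (Sg nx y0 ny).

Hypothesis Hkill : forall (M : lsa F) (w' : lsa_car L -> lsa_car L -> lsa_car M),
  ext_pairing w' -> forall l v : 'I_K, ~~ (l < nx)%N -> ~~ ((y0 <= l) && (l < y0 + ny))%N ->
  w' (E l) (E v) = 0.

Lemma Sg_size : size S = (r + s)%N.
Proof. by rewrite /Sg !size_cat size_Sxx size_Syy size_Sxy hr hs addnA. Qed.

Lemma Sg_HP : forall k : 'I_(r + s), exists i j : 'I_K,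
  [/\ nth (0,0)%N S k = ((i : nat), (j : nat)), p i (+) p j = (r <= k)%N & ((i : nat) = j -> p i)].
Proof.
move=> k; have hk : (k < size S)%N by rewrite Sg_size.
have := nth_Sg hk; set q := nth _ _ _; case: q => a b.
case=> [[h1 h2] | [h1 h2] | [h1 h2]].
- move: h2; rewrite mem_Sxx => h2.
  have ha : (a < K)%N by lia. have hb : (b < K)%N by lia.
  exists (Ordinal ha), (Ordinal hb); split => //=.
  + rewrite !hpx //=; [apply/esym/negbTE; rewrite -ltnNge; lia | lia | lia].
  + lia.
- move: h2; rewrite mem_Syy => h2.
  have ha : (a < K)%N by lia. have hb : (b < K)%N by lia.
  exists (Ordinal ha), (Ordinal hb); split => //=.
  + rewrite !hpy //=; [apply/esym/negbTE; rewrite -ltnNge; lia | lia | lia].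
  + by move=> _; rewrite hpy //=; lia.
- move: h2; rewrite mem_Sxy => h2.
  have ha : (a < K)%N by lia. have hb : (b < K)%N by lia.
  exists (Ordinal ha), (Ordinal hb); split => //=.
  + rewrite hpx ?hpy //=; [apply/esym; lia | lia | lia].
  + lia.
Qed.

Lemma Sg_rev : forall i j : nat, i != j -> (i, j) \in S -> (j, i) \notin S.
Proof. move=> i j; rewrite !mem_Sg; lia. Qed.

Lemma Sg_zz : ((z : nat), (z : nat)) \notin S.
Proof. move: hz; rewrite mem_Sg; lia. Qed.

Lemma Sg_dead : forall (M : lsa F) (w' : lsa_car L -> lsa_car L -> lsa_car M),
  ext_pairing w' -> forall l l' : 'I_K, ((l : nat), (l' : nat)) \notin S ->
  ((l' : nat), (l : nat)) \notin S -> w' (E l) (E l') = 0.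
Proof.
move=> M w' hw l l' H1 H2.
have hw0 := hw; case: hw0 => w1 [w2 [w3 [w4 [w5 [w6 [w7 w8]]]]]].
case: (boolP ((l < nx)%N || ((y0 <= l) && (l < y0 + ny))%N)) => hl; last first.
  by apply: Hkill => //; move: hl; rewrite negb_or => /andP[].
case: (boolP ((l' < nx)%N || ((y0 <= l') && (l' < y0 + ny))%N)) => hl'; last first.
  have := w7 _ _ _ _ (@homE _ _ p br l) (@homE _ _ p br l').
  have hk : w' (E l') (E l) = 0.
    by apply: Hkill => //; move: hl'; rewrite negb_or => /andP[].
  by rewrite hk scaler0 addr0.
have ll' : l = l' /\ (l < nx)%N.
  by move: H1 H2 hl hl'; rewrite !mem_Sg => H1 H2 hl hl'; split; [apply: ord_inj|]; lia.
case: ll' => <- hlx; apply: w8.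
by have := @homE _ _ p br l; rewrite hpx.
Qed.

Lemma zfree_Sg : ~~ (z < nx)%N -> forall x : nat, ((z : nat), x) \notin S /\ (x, (z : nat)) \notin S.
Proof. move=> hzx x; move: hz hzx; rewrite !mem_Sg; split; lia. Qed.

Theorem gen_Sg
  (H4 : forall a a' b x x', forall y, lsa_hom L a x -> lsa_hom L a' x' -> lsa_hom L b y ->
    wS p r s S (br x x') y = wS p r s S x (br x' y) - sgn F (a && a') *: wS p r s S x' (br x y))
  (H5 : forall a b b' x y y', lsa_hom L a x -> lsa_hom L b y -> lsa_hom L b' y' ->
    wS p r s S x (br y y') = sgn F (b' && (a (+) b)) *: wS p r s S (br y' x) y
                     - sgn F (a && b) *: wS p r s S (br y x) y') :
  ext_square_iso L (Aab F r s).
Proof.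
exact: (gen_main hF2 Sg_size (@uniq_Sg nx y0 ny hxy) Sg_HP Sg_rev Sg_dead Hbr Sg_zz H4 H5).
Qed.

End GenSg.

Lemma boolR_mul (F : fieldType) (b1 b2 : bool) : (b1%:R * b2%:R : F) = (b1 && b2)%:R.
Proof. by case: b1; case: b2; rewrite ?mul1r ?mul0r. Qed.

Lemma falseR (F : fieldType) : (false%:R : F) = 0.
Proof. by []. Qed.
Lemma trueR (F : fieldType) : (true%:R : F) = 1.
Proof. by []. Qed.

Lemma sel0 (F : fieldType) (c1 e1 c2 e2 : bool) : (e1 -> e2 -> False) ->
  (((c1 && e1) && (c2 && e2))%:R : F) = 0.
Proof. by case: e1; case: e2; rewrite ?andbF ?andFb //= => H; exfalso; apply: H. Qed.

Lemma sel1 (F : fieldType) (c1 e1 c2 e2 : bool) : c1 -> e1 -> c2 -> e2 ->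
  (((c1 && e1) && (c2 && e2))%:R : F) = 1.
Proof. by move=> -> -> -> ->. Qed.

Lemma kill4 (F : fieldType) (K : nat) (p : 'I_K -> bool) (br : 'rV[F]_K -> 'rV[F]_K -> 'rV[F]_K)
  (z : 'I_K) (B : 'rV[F]_K -> 'rV[F]_K -> F)
  (Hbr : forall u v, br u v = B u v *: ebasis F K z)
  (M : lsa F) (w' : lsa_car (coord_lsa p br) -> lsa_car (coord_lsa p br) -> lsa_car M)
  (hw : ext_pairing w') (a a' v : 'I_K) :
  B (ebasis F K a) (ebasis F K a') = 1 -> B (ebasis F K a') (ebasis F K v) = 0 ->
  B (ebasis F K a) (ebasis F K v) = 0 -> w' (ebasis F K z) (ebasis F K v) = 0.
Proof.
move=> h1 h2 h3.
have hw0 := hw; case: hw0 => w1 [w2 [w3 [w4 _]]].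
have := w4 _ _ _ _ _ _ (@homE _ _ p br a) (@homE _ _ p br a') (@homE _ _ p br v).
rewrite /= !Hbr h1 h2 h3 !scale0r scale1r.
have l2 : forall x, islin (w' x) by move=> x c u u'; apply: w2.
by rewrite !(lin0 (l2 _)) scaler0 subrr.
Qed.

Section HmnGen.
Variables (F : fieldType) (hF2 : (2%:R : F) != 0) (m n : nat) (hmn : (2 <= m + n)%N).
Local Notation K := (2 * m + 1 + n)%N.
Local Notation E := (ebasis F (2 * m + 1 + n)).

Definition Bmn (u v : 'rV[F]_(2 * m + 1 + n)) : F :=
  (\sum_(i < m) (Defs.coord u i * Defs.coord v (m + i)%N - Defs.coord u (m + i)%N * Defs.coord v i)
   + \sum_(j < n) Defs.coord u (2 * m + 1 + j)%N * Defs.coord v (2 * m + 1 + j)%N).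

Lemma Bmn_E (a b : nat) : Bmn (E a) (E b) =
  \sum_(i < m) (((((i < K) && ((i : nat) == a)) && ((m + i < K) && (m + i == b))))%N%:R
                - ((((m + i < K) && (m + i == a)) && ((i < K) && ((i : nat) == b))))%N%:R)
  + \sum_(j < n) ((((2 * m + 1 + j < K) && (2 * m + 1 + j == a))
                    && ((2 * m + 1 + j < K) && (2 * m + 1 + j == b)))%N%:R).
Proof. by rewrite /Bmn; congr (_ + _); apply: eq_bigr => i _; rewrite !coord_eb !boolR_mul. Qed.

Lemma Bmn_zero (a b : nat) :
  ~~ [|| (a < m) && (b == m + a), (m <= a < 2 * m) && (a == m + b) | (2 * m < a) && (b == a)]%N ->
  Bmn (E a) (E b) = 0.
Proof.
clear hmn hF2.
case/norP => h1 /norP [h2 h3].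
rewrite Bmn_E !big1 ?addr0 // => i _.
  by rewrite sel0 // => /eqP e1 /eqP e2; move: h3; rewrite -e1 -e2; lia.
rewrite !sel0 ?subrr //.
  by move=> /eqP e1 /eqP e2; move: h2; rewrite -e1 -e2; move: (ltn_ord i); lia.
by move=> /eqP e1 /eqP e2; move: h1; rewrite -e1 -e2; move: (ltn_ord i); lia.
Qed.

Lemma Bmn_x (i0 : nat) : (i0 < m)%N -> Bmn (E i0) (E (m + i0)) = 1.
Proof.
clear hmn hF2.
move=> h; rewrite Bmn_E [X in _ + X]big1 ?addr0 => [|j _]; last first.
  by rewrite sel0 // => /eqP e1 /eqP e2; move: e1; lia.
rewrite (bigD1 (Ordinal h)) //= big1 ?addr0 => [|i].
  rewrite sel1 ?sel0 ?subr0 //; try lia.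
rewrite -val_eqE /= => hi.
rewrite !sel0 ?subrr //.
  by move=> /eqP e1 /eqP e2; move: e1 e2; lia.
by move=> /eqP e1 /eqP e2; move: hi e1 e2; lia.
Qed.

Lemma Bmn_y (j0 : nat) : (j0 < n)%N -> Bmn (E (2 * m + 1 + j0)) (E (2 * m + 1 + j0)) = 1.
Proof.
clear hmn hF2.
move=> h; rewrite Bmn_E big1 ?add0r => [|i _]; last first.
  rewrite !sel0 ?subrr //.
    by move=> /eqP e1 /eqP e2; move: e1 e2 (ltn_ord i); lia.
  by move=> /eqP e1 /eqP e2; move: e1 e2 (ltn_ord i); lia.
rewrite (bigD1 (Ordinal h)) //= big1 ?addr0 => [|j].
  by rewrite sel1 //; lia.
rewrite -val_eqE /= => hj.
by rewrite sel0 // => /eqP e1 /eqP e2; move: hj e1; lia.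
Qed.

Local Notation br := (fun u v : 'rV[F]_(2 * m + 1 + n) => Bmn u v *: E (2 * m)).
Local Notation p := (fun i : 'I_(2 * m + 1 + n) => (2 * m < i)%N).

Lemma zK : (2 * m < K)%N. Proof. lia. Qed.
Definition zz : 'I_K := Ordinal zK.

Lemma Hmn_kill : forall (M : lsa F) (w' : lsa_car (coord_lsa p br) -> lsa_car (coord_lsa p br) -> lsa_car M),
  ext_pairing w' -> forall l v : 'I_K, ~~ (l < 2 * m)%N -> ~~ ((2 * m + 1 <= l) && (l < 2 * m + 1 + n))%N ->
  w' (E l) (E v) = 0.
Proof.
move=> M w' hw l v h1 h2.
have -> : (l : nat) = zz by rewrite /=; move: (ltn_ord l); lia.
have Hbr : forall u v, br u v = Bmn u v *: E zz by [].
case: (boolP ((0 < n)%N && ((v : nat) != 2 * m + 1)%N)) => c1.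
  have ha : (2 * m + 1 < K)%N by lia.
  apply: (kill4 Hbr hw (a := Ordinal ha) (a' := Ordinal ha)) => /=.
  - have n0 : (0 < n)%N by lia.
    by move: (Bmn_y n0); rewrite addn0.
  - by apply: Bmn_zero; lia.
  - by apply: Bmn_zero; lia.
case: (boolP ((0 < m)%N && ((v : nat) != 0)%N && ((v : nat) != m))) => c2.
  have ha : (0 < K)%N by lia. have ha' : (m < K)%N by lia.
  apply: (kill4 Hbr hw (a := Ordinal ha) (a' := Ordinal ha')) => /=.
  - have m0 : (0 < m)%N by lia.
    by move: (Bmn_x m0); rewrite addn0.
  - by apply: Bmn_zero; lia.
  - by apply: Bmn_zero; lia.
case: (boolP (1 < m)%N) => c3.
  have ha : (1 < K)%N by lia. have ha' : (m + 1 < K)%N by lia.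
  apply: (kill4 Hbr hw (a := Ordinal ha) (a' := Ordinal ha')) => /=.
  - by rewrite Bmn_x //; lia.
  - by apply: Bmn_zero; lia.
  - by apply: Bmn_zero; lia.
have c4 : (1 < n)%N by lia.
have ha : (2 * m + 1 + 1 < K)%N by lia.
apply: (kill4 Hbr hw (a := Ordinal ha) (a' := Ordinal ha)) => /=.
- by rewrite Bmn_y //; lia.
- by apply: Bmn_zero; lia.
- by apply: Bmn_zero; lia.
Qed.

Lemma Hmn_r : (2 * m ^ 2 - m + (n * (n + 1)) %/ 2)%N = ('C(2 * m, 2) + 'C(n.+1, 2))%N.
Proof.
rewrite !bin2 /= -!divn2; congr addn.
  case: m => [|m'] //=.
  rewrite (_ : (2 * m'.+1 * (2 * m'.+1).-1 = (m'.+1 * (2 * m'.+1).-1) * 2)%N); last by lia.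
  rewrite mulnK //; lia.
by rewrite mulnC addn1.
Qed.

Theorem Hmn_main : ext_square_iso (Hmn F m n)
       (Aab F (2 * m ^ 2 - m + (n * (n + 1)) %/ 2) (2 * m * n)).
Proof.
have Hbr : forall u v, br u v = Bmn u v *: E zz by [].
have hxy : (2 * m <= 2 * m + 1)%N by lia.
have hyK : (2 * m + 1 + n <= K)%N by lia.
have hz : ~~ ((2 * m + 1 <= zz) && (zz < 2 * m + 1 + n))%N by rewrite /=; lia.
have hzx : ~~ (zz < 2 * m)%N by rewrite /=; lia.
have hsz : size (Sg (2 * m) (2 * m + 1) n) =
   ((2 * m ^ 2 - m + (n * (n + 1)) %/ 2) + 2 * m * n)%N.
  by rewrite /Sg !size_cat size_Sxx size_Syy size_Sxy Hmn_r addnA.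
apply: (@gen_Sg F hF2 K p br zz Bmn Hbr (2 * m) (2 * m + 1) n _ _ hxy hyK).
- by move=> i /= hi; lia.
- by move=> i /= hi; lia.
- exact: Hmn_r.
- by [].
- exact: hz.
- exact: Hmn_kill.
- apply: (H4_zfree hsz Hbr); exact: (zfree_Sg hF2 hxy hyK Hmn_r erefl hz hzx).
- apply: (H5_zfree hsz Hbr); exact: (zfree_Sg hF2 hxy hyK Hmn_r erefl hz hzx).
Qed.

End HmnGen.

Section HmGen.
Variables (F : fieldType) (hF2 : (2%:R : F) != 0) (m : nat) (hm : (2 <= m)%N).
Local Notation K := (2 * m + 1)%N.
Local Notation E := (ebasis F (2 * m + 1)).

Definition Bhm (u v : 'rV[F]_(2 * m + 1)) : F :=
  \sum_(j < m) (Defs.coord u j * Defs.coord v (m + j)%N - Defs.coord u (m + j)%N * Defs.coord v j).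

Lemma Bhm_E (a b : nat) : Bhm (E a) (E b) =
  \sum_(i < m) (((((i < K) && ((i : nat) == a)) && ((m + i < K) && (m + i == b))))%N%:R
                - ((((m + i < K) && (m + i == a)) && ((i < K) && ((i : nat) == b))))%N%:R).
Proof. by rewrite /Bhm; apply: eq_bigr => i _; rewrite !coord_eb !boolR_mul. Qed.

Lemma Bhm_zero (a b : nat) :
  ~~ [|| (a < m) && (b == m + a) | (m <= a < 2 * m) && (a == m + b)]%N ->
  Bhm (E a) (E b) = 0.
Proof.
case/norP => h1 h2.
rewrite Bhm_E big1 // => i _.
rewrite !sel0 ?subrr //.
  by move=> /eqP e1 /eqP e2; move: h2; rewrite -e1 -e2; move: (ltn_ord i); lia.
by move=> /eqP e1 /eqP e2; move: h1; rewrite -e1 -e2; move: (ltn_ord i); lia.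
Qed.

Lemma Bhm_x (i0 : nat) : (i0 < m)%N -> Bhm (E i0) (E (m + i0)) = 1.
Proof.
move=> h; rewrite Bhm_E.
rewrite (bigD1 (Ordinal h)) //= big1 ?addr0 => [|i].
  rewrite sel1 ?sel0 ?subr0 //; try lia.
rewrite -val_eqE /= => hi.
rewrite !sel0 ?subrr //.
  by move=> /eqP e1 /eqP e2; move: e1 e2; lia.
by move=> /eqP e1 /eqP e2; move: hi e1 e2; lia.
Qed.

Local Notation br := (fun u v : 'rV[F]_(2 * m + 1) => Bhm u v *: E (2 * m)).
Local Notation p := (fun i : 'I_(2 * m + 1) => (m <= i)%N).

Lemma zK' : (2 * m < K)%N. Proof. lia. Qed.
Definition zz' : 'I_K := Ordinal zK'.

Lemma Hm_kill : forall (M : lsa F) (w' : lsa_car (coord_lsa p br) -> lsa_car (coord_lsa p br) -> lsa_car M),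
  ext_pairing w' -> forall l v : 'I_K, ~~ (l < m)%N -> ~~ ((m <= l) && (l < m + m))%N ->
  w' (E l) (E v) = 0.
Proof.
move=> M w' hw l v h1 h2.
have -> : (l : nat) = zz' by rewrite /=; move: (ltn_ord l); lia.
have Hbr : forall u v, br u v = Bhm u v *: E zz' by [].
case: (boolP (((v : nat) != 0)%N && ((v : nat) != m))) => c2.
  have ha : (0 < K)%N by lia. have ha' : (m < K)%N by lia.
  apply: (kill4 Hbr hw (a := Ordinal ha) (a' := Ordinal ha')) => /=.
  - have m0 : (0 < m)%N by lia.
    by move: (Bhm_x m0); rewrite addn0.
  - by apply: Bhm_zero; lia.
  - by apply: Bhm_zero; lia.
have ha : (1 < K)%N by lia. have ha' : (m + 1 < K)%N by lia.
apply: (kill4 Hbr hw (a := Ordinal ha) (a' := Ordinal ha')) => /=.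
- by rewrite Bhm_x //; lia.
- by apply: Bhm_zero; lia.
- by apply: Bhm_zero; lia.
Qed.

Lemma Hm_r : (m ^ 2)%N = ('C(m, 2) + 'C(m.+1, 2))%N.
Proof.
have h : ('C(m, 2) * 2 = m * m.-1)%N.
  by rewrite (_ : 2 = 2`!)%N // bin_ffact ffactnS ffactn1.
rewrite binS bin1; nia.
Qed.

Theorem Hm_main : ext_square_iso (Hm F m) (Aab F (m ^ 2) (m ^ 2)).
Proof.
have Hbr : forall u v, br u v = Bhm u v *: E zz' by [].
have hxy : (m <= m)%N by lia.
have hyK : (m + m <= K)%N by lia.
have hz : ~~ ((m <= zz') && (zz' < m + m))%N by rewrite /=; lia.
have hzx : ~~ (zz' < m)%N by rewrite /=; lia.
have hs : (m ^ 2 = m * m)%N by rewrite expnS expn1.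
have hsz : size (Sg m m m) = (m ^ 2 + m ^ 2)%N.
  by rewrite /Sg !size_cat size_Sxx size_Syy size_Sxy addnA -Hm_r hs.
apply: (@gen_Sg F hF2 K p br zz' Bhm Hbr m m m _ _ hxy hyK).
- by move=> i /= hi; lia.
- by move=> i /= hi; lia.
- exact: Hm_r.
- exact: hs.
- exact: hz.
- exact: Hm_kill.
- apply: (H4_zfree hsz Hbr); exact: (zfree_Sg hF2 hxy hyK Hm_r hs hz hzx).
- apply: (H5_zfree hsz Hbr); exact: (zfree_Sg hF2 hxy hyK Hm_r hs hz hzx).
Qed.

End HmGen.

Section H10.
Variables (F : fieldType) (hF2 : (2%:R : F) != 0).
Local Notation K := (2 * 1 + 1 + 0)%N.
Local Notation o0 := (@Ordinal K 0 isT).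
Local Notation o1 := (@Ordinal K 1 isT).
Local Notation o2 := (@Ordinal K 2 isT).

Lemma sum3 (g : 'I_K -> F) : \sum_(i < K) g i = g o0 + g o1 + g o2.
Proof.
rewrite (bigD1 o0) //= (bigD1 o1) //= (bigD1 o2) //= big_pred0 ?addr0 ?addrA //.
by case=> [[|[|[|i]]] hi].
Qed.

Lemma c0 (x : 'rV[F]_K) : Defs.coord x 0 = x 0 o0. Proof. exact: coordE. Qed.
Lemma c1 (x : 'rV[F]_K) : Defs.coord x 1 = x 0 o1. Proof. exact: coordE. Qed.
Lemma c2 (x : 'rV[F]_K) : Defs.coord x 2 = x 0 o2. Proof. exact: coordE. Qed.

Local Notation br := (fun u v : 'rV[F]_K => Bmn u v *: ebasis F K (2 * 1)).
Local Notation p := (fun i : 'I_K => (2 * 1 < i)%N).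
Local Notation S := (Sg 3 3 0).

Ltac zc h := try rewrite (h o0 isT); try rewrite (h o1 isT); try rewrite (h o2 isT).

Lemma H10_H4 : forall (a a' b : bool) (x x' y : 'rV[F]_K),
  lsa_hom (coord_lsa p br) a x -> lsa_hom (coord_lsa p br) a' x' -> lsa_hom (coord_lsa p br) b y ->
  wS p 3 0 S (br x x') y = wS p 3 0 S x (br x' y) - sgn F (a && a') *: wS p 3 0 S x' (br x y).
Proof.
move=> a a' b x x' y hx hx' hy; apply/rowP => k; rewrite /wS /= !mxE !sum3 /Bmn !big_ord1 !big_ord0 /=.
rewrite ?c0 ?c1 ?c2 ?mxE ?ebasisE /=.
case: a hx => hx; zc hx; case: a' hx' => hx'; zc hx'; case: b hy => hy; zc hy;
case: k => [[|[|[|k]]] hk] //; rewrite /T /= ?sgnF ?sgnT; first [ring | match goal with |- ?g => idtac g; fail end].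
Qed.

Lemma H10_H5 : forall (a b b' : bool) (x y y' : 'rV[F]_K),
  lsa_hom (coord_lsa p br) a x -> lsa_hom (coord_lsa p br) b y -> lsa_hom (coord_lsa p br) b' y' ->
  wS p 3 0 S x (br y y') = sgn F (b' && (a (+) b)) *: wS p 3 0 S (br y' x) y
                     - sgn F (a && b) *: wS p 3 0 S (br y x) y'.
Proof.
move=> a b b' x y y' hx hy hy'; apply/rowP => k; rewrite /wS /= !mxE !sum3 /Bmn !big_ord1 !big_ord0 /=.
rewrite ?c0 ?c1 ?c2 ?mxE ?ebasisE /=.
case: a hx => hx; zc hx; case: b hy => hy; zc hy; case: b' hy' => hy'; zc hy';
case: k => [[|[|[|k]]] hk] //; rewrite /T /= ?sgnF ?sgnT; first [ring | match goal with |- ?g => idtac g; fail end].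
Qed.

Theorem H10_main : ext_square_iso (Hmn F 1 0) (Aab F 3 0).
Proof.
have Hbr : forall u v, br u v = Bmn u v *: ebasis F K o2 by [].
apply: (@gen_Sg F hF2 K p br o2 (@Bmn F 1 0) Hbr 3 3 0 3 0).
- by [].
- by [].
- by move=> i /= hi; lia.
- by move=> i /= hi; lia.
- by [].
- by [].
- by [].
- by move=> M w' hw l v; rewrite (ltn_ord l).
- exact: H10_H4.
- exact: H10_H5.
Qed.

End H10.

Section H01.
Variables (F : fieldType) (hF2 : (2%:R : F) != 0) (hF3 : (3%:R : F) != 0).
Local Notation K := (2 * 0 + 1 + 1)%N.
Local Notation o0 := (@Ordinal K 0 isT).
Local Notation o1 := (@Ordinal K 1 isT).
Local Notation E := (ebasis F K).
Local Notation br := (fun u v : 'rV[F]_K => Bmn u v *: ebasis F K (2 * 0)).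
Local Notation p := (fun i : 'I_K => (2 * 0 < i)%N).

Lemma H01_kill : forall (M : lsa F) (w' : lsa_car (coord_lsa p br) -> lsa_car (coord_lsa p br) -> lsa_car M),
  ext_pairing w' -> forall l v : 'I_K, ~~ (l < 0)%N -> ~~ ((1 <= l) && (l < 1 + 1))%N ->
  w' (E l) (E v) = 0.
Proof.
move=> M w' hw l v _ h2.
have -> : (l : nat) = 0%N by move: (ltn_ord l) h2; lia.
have hw0 := hw; case: hw0 => w1 [w2 [w3 [w4 [w5 [w6 [w7 w8]]]]]].
case: v => [[|[|v]] hv] //=.
  by apply: w8; exact: (@homE _ _ p br o0).
have hB : Bmn (E 1) (E 1) = 1 := @Bmn_y F 0 1 0 isT.
have := w4 _ _ _ _ _ _ (@homE _ _ p br o1) (@homE _ _ p br o1) (@homE _ _ p br o1).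
rewrite /= hB scale1r sgnT scaleN1r opprK.
have := w7 _ _ _ _ (@homE _ _ p br o1) (@homE _ _ p br o0).
rewrite /= sgnF scale1r => /eqP; rewrite addr_eq0 => /eqP ->.
set X := w' (ebasis F K 0) (ebasis F K 1) => hX.
have h3 : (3%:R : F) *: X = 0.
  rewrite scaler_nat !mulrS mulr0n addr0.
  by apply/eqP; rewrite addr_eq0 opprD -hX.
by move/eqP: h3; rewrite scaler_eq0 (negbTE hF3) => /eqP.
Qed.

Theorem H01_main : ext_square_iso (Hmn F 0 1) (Aab F 1 0).
Proof.
have Hbr : forall u v, br u v = Bmn u v *: ebasis F K o0 by [].
have hsz : size (Sg 0 1 1) = (1 + 0)%N by [].
have hxy : (0 <= 1)%N by [].
have hyK : (1 + 1 <= K)%N by [].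
have hz : ~~ ((1 <= o0) && (o0 < 1 + 1))%N by [].
have hzx : ~~ (o0 < 0)%N by [].
apply: (@gen_Sg F hF2 K p br o0 (@Bmn F 0 1) Hbr 0 1 1 1 0 hxy hyK).
- by move=> i /= hi; lia.
- by move=> i /= hi; lia.
- by [].
- by [].
- exact: hz.
- exact: H01_kill.
- apply: (H4_zfree hsz Hbr); exact: (zfree_Sg hF2 hxy hyK (erefl _) (erefl _) hz hzx).
- apply: (H5_zfree hsz Hbr); exact: (zfree_Sg hF2 hxy hyK (erefl _) (erefl _) hz hzx).
Qed.

End H01.

Section H1.
Variables (F : fieldType) (hF2 : (2%:R : F) != 0).
Local Notation K := (2 * 1 + 1)%N.
Local Notation o0 := (@Ordinal K 0 isT).
Local Notation o1 := (@Ordinal K 1 isT).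
Local Notation o2 := (@Ordinal K 2 isT).
Local Notation E := (ebasis F K).

Lemma sum3' (g : 'I_K -> F) : \sum_(i < K) g i = g o0 + g o1 + g o2.
Proof.
rewrite (bigD1 o0) //= (bigD1 o1) //= (bigD1 o2) //= big_pred0 ?addr0 ?addrA //.
by case=> [[|[|[|i]]] hi].
Qed.

Lemma c0' (x : 'rV[F]_K) : Defs.coord x 0 = x 0 o0. Proof. exact: coordE. Qed.
Lemma c1' (x : 'rV[F]_K) : Defs.coord x 1 = x 0 o1. Proof. exact: coordE. Qed.
Lemma c2' (x : 'rV[F]_K) : Defs.coord x 2 = x 0 o2. Proof. exact: coordE. Qed.

Local Notation br := (fun u v : 'rV[F]_K => Bhm u v *: ebasis F K (2 * 1)).
Local Notation p := (fun i : 'I_K => (1 <= i)%N).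
Local Notation S := [:: (1, 1); (0, 1); (0, 2)]%N.

Ltac zc' h := try rewrite (h o0 isT); try rewrite (h o1 isT); try rewrite (h o2 isT).

Lemma H1_H4 : forall (a a' b : bool) (x x' y : 'rV[F]_K),
  lsa_hom (coord_lsa p br) a x -> lsa_hom (coord_lsa p br) a' x' -> lsa_hom (coord_lsa p br) b y ->
  wS p 1 2 S (br x x') y = wS p 1 2 S x (br x' y) - sgn F (a && a') *: wS p 1 2 S x' (br x y).
Proof.
move=> a a' b x x' y hx hx' hy; apply/rowP => k; rewrite /wS /= !mxE !sum3' /Bhm !big_ord1 /=.
rewrite ?c0' ?c1' ?c2' ?mxE ?ebasisE /=.
case: a hx => hx; zc' hx; case: a' hx' => hx'; zc' hx'; case: b hy => hy; zc' hy;
case: k => [[|[|[|k]]] hk] //; rewrite /T /= ?sgnF ?sgnT; first [ring | match goal with |- ?g => idtac g; fail end].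
Qed.

Lemma H1_H5 : forall (a b b' : bool) (x y y' : 'rV[F]_K),
  lsa_hom (coord_lsa p br) a x -> lsa_hom (coord_lsa p br) b y -> lsa_hom (coord_lsa p br) b' y' ->
  wS p 1 2 S x (br y y') = sgn F (b' && (a (+) b)) *: wS p 1 2 S (br y' x) y
                     - sgn F (a && b) *: wS p 1 2 S (br y x) y'.
Proof.
move=> a b b' x y y' hx hy hy'; apply/rowP => k; rewrite /wS /= !mxE !sum3' /Bhm !big_ord1 /=.
rewrite ?c0' ?c1' ?c2' ?mxE ?ebasisE /=.
case: a hx => hx; zc' hx; case: b hy => hy; zc' hy; case: b' hy' => hy'; zc' hy';
case: k => [[|[|[|k]]] hk] //; rewrite /T /= ?sgnF ?sgnT; first [ring | match goal with |- ?g => idtac g; fail end].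
Qed.

Lemma Bhm1 (a b : nat) : Bhm (E a) (E b) =
  (((a == 0) && (b == 1))%N%:R - ((a == 1) && (b == 0))%N%:R : F).
Proof.
rewrite /Bhm big_ord1 /= !coord_eb /= !boolR_mul.
by case: a => [|[|a]]; case: b => [|[|b]].
Qed.

Lemma H1_dead : forall (M : lsa F) (w' : lsa_car (coord_lsa p br) -> lsa_car (coord_lsa p br) -> lsa_car M),
  ext_pairing w' -> forall l l' : 'I_K, ((l : nat), (l' : nat)) \notin S ->
  ((l' : nat), (l : nat)) \notin S -> w' (E l) (E l') = 0.
Proof.
move=> M w' hw l l' H1 H2.
have hw0 := hw; case: hw0 => w1 [w2 [w3 [w4 [w5 [w6 [w7 w8]]]]]].
have l2 : forall x, islin (w' x) by move=> x c u u'; apply: w2.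
have l1 : forall x, islin (w' ^~ x) by move=> x c u u'; apply: w1.
have Hbr : forall u v, br u v = Bhm u v *: E o2 by [].
have zz : w' (E 2) (E 2) = 0.
  apply: (kill4 Hbr hw (a := o0) (a' := o1) (v := o2)); rewrite Bhm1 /=;
  by rewrite ?subr0 ?subrr.
have yz : w' (E 1) (E 2) = 0.
  have := w5 _ _ _ _ _ _ (@homE _ _ p br o1) (@homE _ _ p br o0) (@homE _ _ p br o1).
  rewrite /= !Bhm1 /= !subr0 ?subrr scale1r scale0r (lin0 (l1 _)) scaler0 sub0r sgnF scale1r.
  move=> h; change (w' (E 1) (E (2 * 1)) = 0).
  set X := w' (E 1) (E (2 * 1)) in h *.
  have h7 : w' (E (2 * 1)) (E 1) + sgn F (true && true) *: X = 0 :=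
    w7 _ _ _ _ (@homE _ _ p br o2) (@homE _ _ p br o1).
  move: h7; rewrite sgnT scaleN1r => /eqP; rewrite subr_eq0 => /eqP h7.
  have : (2%:R : F) *: X = 0 by rewrite scaler_nat mulr2n {1}h h7 addNr.
  by move/eqP; rewrite scaler_eq0 (negbTE hF2) => /eqP.
have zy : w' (E 2) (E 1) = 0.
  have := w7 _ _ _ _ (@homE _ _ p br o2) (@homE _ _ p br o1).
  by rewrite /= yz scaler0 addr0.
move: l l' H1 H2 => [[|[|[|l]]] hl] [[|[|[|l']]] hl'] //= _ _.
by apply: w8; exact: (@homE _ _ p br o0).
Qed.

Theorem H1_main : ext_square_iso (Hm F 1) (Aab F 1 2).
Proof.
have Hbr : forall u v, br u v = Bhm u v *: ebasis F K o2 by [].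
apply: (@gen_main F hF2 K p br 1 2 S _ _ _ _ H1_dead o2 (@Bhm F 1) Hbr _ H1_H4 H1_H5).
- by [].
- by [].
- case=> [[|[|[|k]]] hk] //.
  + by exists o1, o1.
  + by exists o0, o1.
  + by exists o0, o2.
- move=> i j ij; rewrite !inE => /or3P [] /eqP [hi hj]; by move: ij; rewrite hi hj.
- by [].
Qed.

End H1.


Unset Implicit Arguments.

Theorem mainTheorem17 (F : fieldType)
  (hF2 : (2%:R : F) != 0) (hF3 : (3%:R : F) != 0) :
  ext_square_iso (Hmn F 1 0) (Aab F 3 0) /\
  ext_square_iso (Hmn F 0 1) (Aab F 1 0) /\
  (forall m n : nat, (2 <= m + n)%N ->
     ext_square_iso (Hmn F m n)
       (Aab F (2 * m ^ 2 - m + (n * (n + 1)) %/ 2) (2 * m * n))) /\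
  ext_square_iso (Hm F 1) (Aab F 1 2) /\
  (forall m : nat, (2 <= m)%N -> ext_square_iso (Hm F m) (Aab F (m ^ 2) (m ^ 2))).
Proof.
split; first exact: (H10_main hF2).
split; first exact: (H01_main hF2 hF3).
split; first by move=> m n hmn; exact: (Hmn_main hF2 hmn).
split; first exact: (H1_main hF2).
by move=> m hm; exact: (Hm_main hF2 hm).
Qed.
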